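(* Let $G$ be a finite group. If $(S,T,U)$ is a TPP triple of $G$ consisting of subgroups $S,T,U$ of $G$, at least one of which is normal in $G$, then $|S|\cdot|T|\cdot|U|\le |G|$.
   Context: For a nonempty subset $X$ of a group $G$, $Q(X):=\{xy^{-1}: x,y\in X\}$ (so $Q(X)=X$ for a subgroup $X$). Nonempty subsets $S,T,U$ of $G$ form a TPP triple if for all $s\in Q(S)$, $t\in Q(T)$, $u\in Q(U)$: $stu=1$ iff $s=t=u=1$. *)

(* Defs.v *)
From mathcomp Require Import all_boot all_fingroup.
Set Implicit Arguments. Unset Strict Implicit. Unset Printing Implicit Defensive.
Local Open Scope group_scope.

Definition Qset (gT : finGroupType) (X : {set gT}) : {set gT} :=
  [set x * y^-1 | x in X, y in X].

Definition TPP (gT : finGroupType) (S T U : {set gT}) : Prop :=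
  [/\ S != set0, T != set0, U != set0 &
   forall s t u, s \in Qset S -> t \in Qset T -> u \in Qset U ->
     (s * t * u = 1 <-> [/\ s = 1, t = 1 & u = 1])].

(* Main.v *)
Require Import Defs.
From mathcomp Require Import all_boot all_fingroup.
From mathcomp Require Import zify.
Set Implicit Arguments. Unset Strict Implicit. Unset Printing Implicit Defensive.
Local Open Scope group_scope.

Lemma key (gT : finGroupType) (G A B C : {group gT}) :
  A \subset G -> B \subset G -> C \subset G -> B \subset 'N(A) ->
  (forall a b c, a \in A -> b \in B -> c \in C -> a * b * c = 1 ->
     [/\ a = 1, b = 1 & c = 1]) ->
  (#|A| * #|B| * #|C| <= #|G|)%N.
Proof.
move=> sAG sBG sCG nAB H.
have AB1 : #|A :&: B| = 1%N.
  apply/eqP; rewrite -trivg_card1 -subG1; apply/subsetP => x /setIP [xA xB].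
  have e : x * x^-1 * 1 = 1 by rewrite mulgV mulg1.
  have [-> _ _] := H x (x^-1) 1 xA (groupVr xB) (group1 C) e.
  by rewrite inE.
set K := (A <*> B)%G.
have KE : (K : {set gT}) = A * B by rewrite /K /= norm_joinEr.
have KC1 : #|K :&: C| = 1%N.
  apply/eqP; rewrite -trivg_card1 -subG1; apply/subsetP => x /setIP [].
  rewrite KE => /mulsgP [a b aA bB ->] xC.
  have e : a * b * (a * b)^-1 = 1 by rewrite mulgV.
  have [-> -> _] := H a b ((a * b)^-1) aA bB (groupVr xC) e.
  by rewrite mulg1 inE.
have := mul_cardG A B; rewrite AB1 muln1 -KE => ->.
have := mul_cardG K C; rewrite KC1 muln1 => ->.
apply: subset_leq_card; apply: mul_subG => //.
by rewrite /K /= join_subG sAG sBG.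
Qed.

Lemma inQ (gT : finGroupType) (S : {group gT}) x : x \in S -> x \in Qset S.
Proof.
move=> xS; have -> : x = x * 1^-1 by rewrite invg1 mulg1.
by apply: imset2_f.
Qed.

Theorem mainTheorem3 (gT : finGroupType) (G S T U : {group gT}) :
  S \subset G -> T \subset G -> U \subset G ->
  TPP S T U ->
  [\/ (S <| G)%g, (T <| G)%g | (U <| G)%g] ->
  (#|S| * #|T| * #|U| <= #|G|)%N.
Proof.
move=> sS sT sU [_ _ _ tpp] N.
have H s t u : s \in S -> t \in T -> u \in U -> s * t * u = 1 ->
    [/\ s = 1, t = 1 & u = 1].
  by move=> sS' tT uU e; exact: ((tpp _ _ _ (inQ sS') (inQ tT) (inQ uU)).1 e).
case: N => /andP [_ nG].
- apply: (@key _ G S T U) => //; first exact: subset_trans sT nG.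
- have -> : (#|S| * #|T| * #|U| = #|T| * #|U| * #|S|)%N by lia.
  apply: (@key _ G T U S) => //; first exact: subset_trans sU nG.
  move=> a b c aT bU cS e.
  have ab : a * b = c^-1 by apply: (mulIg c); rewrite e mulVg.
  have e' : c * a * b = 1 by rewrite -mulgA ab mulgV.
  by have [? ? ?] := H _ _ _ cS aT bU e'.
- have -> : (#|S| * #|T| * #|U| = #|U| * #|S| * #|T|)%N by lia.
  apply: (@key _ G U S T) => //; first exact: subset_trans sS nG.
  move=> a b c aU bS cT e.
  have bc : b * c = a^-1 by apply: (mulgI a); rewrite mulgA e mulgV.
  have e' : b * c * a = 1 by rewrite bc mulVg.
  by have [? ? ?] := H _ _ _ bS cT aU e'.
Qed.
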